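(* Let $\mathcal{W}_1,\ldots,\mathcal{W}_n\subset\mathbb{R}^n$ be finite sets with convex hulls $Q_1,\ldots,Q_n$ respectively, such that each $Q_i$ is a segment (of positive length) and $Q=Q_1+\cdots+Q_n$ has dimension $n$. Then for every vector $\delta\in\mathbb{R}^n$ of sufficiently small norm which does not lie in the linear span of $F-F$ for any proper face $F$ of $Q$, $$D(\mathcal{W}_1,\ldots,\mathcal{W}_n)=|(\mathcal{W}_1+\cdots+\mathcal{W}_n)\cap(\delta+Q)|.$$
   Context: $D(\mathcal{W}_1,\ldots,\mathcal{W}_n)=\sum_{I\subset[n]}(-1)^{n-|I|}|\sum_{i\in I}\mathcal{W}_i|$, where $\sum_{i\in I}\mathcal{W}_i=\{\sum_{i\in I}w_i:w_i\in\mathcal{W}_i\}$ and the term for $I=\emptyset$ is $(-1)^n\cdot1$. *)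

(* Defs.v *)
From HB Require Import structures.
From mathcomp Require Import all_boot all_order all_algebra.
From Stdlib Require Import ClassicalEpsilon.
Set Implicit Arguments. Unset Strict Implicit. Unset Printing Implicit Defensive.
Import Order.TTheory GRing.Theory Num.Theory.
Local Open Scope ring_scope.

Definition pbool (P : Prop) : bool :=
  if excluded_middle_informative P then true else false.

Section Defs.
Variables (R : realFieldType) (n : nat).
Notation V := 'rV[R]_n.

Definition dotv (u v : V) : R := \sum_(i < n) u ord0 i * v ord0 i.
Definition sqnorm (u : V) : R := dotv u u.

Definition sumset (s t : seq V) : seq V := undup [seq x + y | x <- s, y <- t].

Definition msum (W : 'I_n -> seq V) (I : {set 'I_n}) : seq V :=
  foldr (fun i acc => sumset (W i) acc) [:: 0] (enum I).

Definition Dmix (W : 'I_n -> seq V) : int :=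
  \sum_(I : {set 'I_n}) (-1) ^+ (n - #|I|) * (size (msum W I))%:Z.

Definition inconv (W : seq V) (x : V) : Prop :=
  exists lam : 'I_(size W) -> R,
    (forall j, 0 <= lam j) /\ \sum_j lam j = 1 /\
    x = \sum_j lam j *: nth 0 W j.

Definition is_pos_segment (W : seq V) : Prop :=
  exists a b : V, a != b /\
    forall x, inconv W x <-> exists t : R, 0 <= t <= 1 /\ x = (1 - t) *: a + t *: b.

Definition inQ (W : 'I_n -> seq V) (x : V) : Prop :=
  exists q : 'I_n -> V, (forall i, inconv (W i) (q i)) /\ x = \sum_i q i.

Definition inspan (S : V -> Prop) (v : V) : Prop :=
  exists (k : nat) (c : 'I_k -> R) (u : 'I_k -> V),
    (forall j, S (u j)) /\ v = \sum_j c j *: u j.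

Definition diffset (F : V -> Prop) (v : V) : Prop :=
  exists x y, F x /\ F y /\ v = x - y.

Definition full_dim (S : V -> Prop) : Prop := forall v, inspan (diffset S) v.

Definition is_face (P F : V -> Prop) : Prop :=
  exists c : V, forall x, F x <-> (P x /\ forall y, P y -> dotv c y <= dotv c x).

Definition is_proper_face (P F : V -> Prop) : Prop :=
  is_face P F /\ exists x, P x /\ ~ F x.

End Defs.

(* Main.v *)
Require Import Defs.
From HB Require Import structures.
From mathcomp Require Import all_boot all_order all_algebra.
From mathcomp Require Import lra.
From Stdlib Require Import ClassicalEpsilon.
Import Order.TTheory GRing.Theory Num.Theory.
Local Open Scope ring_scope.
Set Implicit Arguments. Unset Strict Implicit. Unset Printing Implicit Defensive.
Lemma cnt_allpairs (S T U : Type) (f : S -> T -> U) (P : pred U) s t :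
  count P [seq f x y | x <- s, y <- t] = (\sum_(x <- s) count (fun y => P (f x y)) t)%N.
Proof.
elim: s => [|x s IH]; first by rewrite big_nil.
by rewrite big_cons /= count_cat count_map IH.
Qed.

Lemma cnt_andl (T : Type) (b : bool) (P : pred T) t :
  count (fun y => b && P y) t = (b * count P t)%N.
Proof. by case: b => /=; rewrite ?mul1n ?mul0n ?count_pred0 //; elim: t. Qed.

Lemma sum_bmul (T : Type) (b : pred T) (C : nat) s :
  (\sum_(x <- s) (b x * C))%N = (count b s * C)%N.
Proof.
elim: s => [|x s IH]; first by rewrite big_nil.
by rewrite big_cons IH /= mulnDl.
Qed.

Section Msum.
Variables (R : realFieldType) (n : nat) (W : 'I_n -> seq 'rV[R]_n).
Variables (kap : 'rV[R]_n -> 'I_n -> R) (a : 'I_n -> 'rV[R]_n).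
Hypothesis kD : forall x y j, kap (x + y) j = kap x j + kap y j.
Hypothesis k0 : forall j, kap 0 j = 0.
Hypothesis H1 : forall i x j, x \in W i -> j != i -> kap x j = kap (a i) j.
Hypothesis H2 : forall i x x', x \in W i -> x' \in W i -> kap x i = kap x' i -> x = x'.

Definition Sf (l : seq 'I_n) := foldr (fun i acc => sumset (W i) acc) [:: 0] l.

Lemma Sf_kappa l y j : y \in Sf l -> j \notin l -> kap y j = \sum_(k <- l) kap (a k) j.
Proof.
elim: l y => [|i l IH] y /=.
  by rewrite inE big_nil => /eqP -> _; rewrite k0.
rewrite /sumset mem_undup inE negb_or => /allpairsP [[x z] /= [xW zS ->]] /andP [ji jl].
by rewrite kD big_cons (H1 xW) // (IH _ zS jl).
Qed.

Lemma Sf_uniq l : uniq (Sf l).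
Proof. by case: l => //= i l; rewrite undup_uniq. Qed.

Lemma count_Sf l (c : 'I_n -> R) (g : 'I_n -> pred R) : uniq l ->
  count (fun z => all (fun j => g j (kap z j - c j)) l) (Sf l) =
  (\prod_(i <- l) count (fun x => g i (kap x i - (c i - \sum_(k <- l | k != i) kap (a k) i))%R)
      (undup (W i)))%N.
Proof.
elim: l c => [|i l IH] c; first by rewrite big_nil.
move=> /= /andP [il ul].
have pe : perm_eq (sumset (W i) (Sf l)) [seq x + y | x <- undup (W i), y <- Sf l].
  apply: uniq_perm; first exact: undup_uniq.
    apply: allpairs_uniq; [exact: undup_uniq | exact: Sf_uniq |].
    move=> [x y] [x' y'] /allpairsP [[x1 y1] /= [x1W y1S [-> ->]]].
    move=> /allpairsP [[x2 y2] /= [x2W y2S [-> ->]]] /= E.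
    rewrite !mem_undup in x1W x2W.
    have ex : x1 = x2.
      apply: (H2 x1W x2W).
      have := congr1 (fun z => kap z i) E; rewrite /= !kD.
      by rewrite (Sf_kappa y1S il) (Sf_kappa y2S il) => /addIr.
    by move: E; rewrite ex => /addrI ->.
  move=> z; rewrite /sumset mem_undup.
  apply/allpairsP/allpairsP => [] [[x y] /= [xW yS ->]];
    by exists (x, y); split => //=; rewrite ?mem_undup in xW *.
rewrite ((permP pe) _) cnt_allpairs big_cons.
have Ei : \sum_(k <- i :: l | k != i) kap (a k) i = \sum_(k <- l) kap (a k) i.
  rewrite big_cons eqxx /= -big_filter; congr (\sum_(k <- _) _).
  apply/all_filterP/allP => k kl; apply/eqP => ki; by move: il; rewrite -ki kl.
rewrite Ei.
transitivity (\sum_(x <- undup (W i))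
   (nat_of_bool (g i (kap x i - (c i - \sum_(k <- l) kap (a k) i))%R) *
    count (fun z => all (fun j => g j (kap z j - (c j - kap (a i) j))%R) l) (Sf l)))%N.
  apply: eq_big_seq => x; rewrite mem_undup => xW.
  rewrite -cnt_andl; apply: eq_in_count => y yS /=.
  rewrite kD (Sf_kappa yS il); congr andb.
    by rewrite opprB addrA.
  apply: eq_in_all => j jl; rewrite kD (H1 xW); last by apply/eqP => ji; move: il; rewrite -ji jl.
  by rewrite opprB addrA [kap y j + _]addrC.
rewrite sum_bmul (IH _ ul); congr (_ * _)%N.
apply: eq_big_seq => j jl; apply: eq_count => x /=.
have ji : i != j by apply/eqP => ji; move: il; rewrite ji jl.
by rewrite big_cons ji (opprD (kap (a i) j)) addrA.
Qed.

End Msum.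
Lemma alt_sum (n : nat) (m : 'I_n -> int) :
  \sum_(I : {set 'I_n}) (-1) ^+ (n - #|I|) * \prod_(i in I) m i = \prod_i (m i - 1).
Proof.
transitivity (\prod_(i : 'I_n) \sum_(b : bool) (if b then m i else -1)); last first.
  by apply: eq_bigr => i _; rewrite big_bool.
rewrite bigA_distr_bigA /=.
rewrite (reindex (fun f : {ffun 'I_n -> bool} => [set i | f i])); last first.
  exists (fun A : {set 'I_n} => [ffun i => i \in A]) => [f _|A _].
    by apply/ffunP => i; rewrite ffunE inE.
  by apply/setP => i; rewrite inE ffunE.
apply: eq_bigr => f _.
rewrite [RHS](bigID (fun i => f i)) /= mulrC; congr (_ * _).
  by apply: eq_big => i; rewrite ?inE // => ->.
rewrite (eq_bigr (fun _ => -1)); last by move=> i /negbTE ->.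
rewrite prodr_const; congr (_ ^+ _).
have := cardC [set i | f i]; rewrite card_ord => E; rewrite -{1}E addKn.
by apply: eq_card => i; rewrite !inE.
Qed.
Section Seg.
Variables (R : realFieldType) (n : nat).
Notation V := 'rV[R]_n.

Lemma mem_inconv (s : seq V) x : x \in s -> inconv s x.
Proof.
move=> xs; have hj : (index x s < size s)%N by rewrite index_mem.
pose j0 : 'I_(size s) := Ordinal hj.
exists (fun j => (j == j0)%:R); split; first by move=> j; rewrite ler0n.
split.
  by rewrite (bigD1 j0) //= eqxx big1 ?addr0 // => j /negbTE ->.
rewrite (bigD1 j0) //= eqxx scale1r big1 ?addr0 ?nth_index //.
by move=> j /negbTE ->; rewrite scale0r.
Qed.

Lemma endpoint (s : seq V) p q : p != q ->
  (forall x, inconv s x -> exists t : R, 0 <= t <= 1 /\ x = p + t *: (q - p)) ->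
  inconv s p -> p \in s.
Proof.
move=> pq hs [lam [l0 [l1 ep]]].
have : forall j : 'I_(size s), exists t : R, 0 <= t <= 1 /\ nth 0 s j = p + t *: (q - p).
  by move=> j; apply: hs; apply: mem_inconv; apply: mem_nth.
move/fin_all_exists => [t ht].
have e : \sum_j lam j *: nth 0 s j = p + (\sum_j lam j * t j) *: (q - p).
  under eq_bigr => j _ do rewrite (proj2 (ht j)) scalerDr scalerA.
  by rewrite big_split /= -scaler_suml l1 scale1r -scaler_suml.
have S0 : \sum_j lam j * t j = 0.
  move: ep; rewrite e => /eqP; rewrite -subr_eq0 opprD addrA subrr add0r oppr_eq0.
  by rewrite scaler_eq0 subr_eq0 [q == p]eq_sym (negbTE pq) orbF => /eqP.
have hz := psumr_eq0P (fun j _ => mulr_ge0 (l0 j) (proj1 (andP (proj1 (ht j))))) S0.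
case: (pickP (fun j => lam j != 0)) => [j lj|/= h0]; last first.
  by move: l1; rewrite big1 => [/eqP|j _]; [rewrite eq_sym oner_eq0 | apply/eqP; rewrite -[_ == _]negbK h0].
have := hz j isT; move/eqP; rewrite mulf_eq0 (negbTE lj) /= => /eqP tj0.
by have := proj2 (ht j); rewrite tj0 scale0r addr0 => <-; apply: mem_nth.
Qed.

End Seg.
Section Geo.
Variables (R : realFieldType) (n : nat).
Notation V := 'rV[R]_n.
Variables (W : 'I_n -> seq V) (a b : 'I_n -> V).
Hypothesis hab : forall i, a i != b i.
Hypothesis hseg : forall i x, inconv (W i) x <->
  exists t : R, 0 <= t <= 1 /\ x = (1 - t) *: a i + t *: b i.
Hypothesis hfull : full_dim (inQ W).

Definition v i := b i - a i.
Definition A := \sum_i a i.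

Lemma hseg' i x : inconv (W i) x <-> exists t : R, 0 <= t <= 1 /\ x = a i + t *: v i.
Proof.
have E t : (1 - t) *: a i + t *: b i = a i + t *: v i.
  by rewrite scalerBl scale1r /v scalerBr addrAC addrA.
split => [/hseg [t [ht ->]]|[t [ht ->]]]; first by exists t; rewrite E.
by apply/hseg; exists t; rewrite E.
Qed.

Lemma aW i : a i \in W i.
Proof.
apply: (endpoint (hab i)); first by move=> x /hseg'.
by apply/hseg'; exists 0; rewrite scale0r addr0 lexx ler01.
Qed.

Lemma bW i : b i \in W i.
Proof.
have ba : b i != a i by rewrite eq_sym hab.
apply: (endpoint ba).
  move=> x /hseg' [t [/andP [t0 t1] ->]]; exists (1 - t).
  rewrite subr_ge0 t1 lerBlDr lerDl t0; split => //.
  rewrite /v scalerBl scale1r -[b i - a i]opprB scalerN addrA [b i + _]addrC subrK.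
  by [].
by apply/hseg'; exists 1; rewrite scale1r /v addrC subrK lexx ler01.
Qed.

Lemma inQ_iff x : inQ W x <->
  exists s : 'I_n -> R, (forall i, 0 <= s i <= 1) /\ x = A + \sum_i s i *: v i.
Proof.
split => [[q [hq ->]]|[s [hs ->]]].
  have : forall i, exists t : R, 0 <= t <= 1 /\ q i = a i + t *: v i.
    by move=> i; apply/hseg'.
  move/fin_all_exists => [s hs]; exists s; split => [i|]; first exact: (proj1 (hs i)).
  by rewrite /A -big_split; apply: eq_bigr => i _; rewrite (proj2 (hs i)).
exists (fun i => a i + s i *: v i); split; last by rewrite /A big_split.
by move=> i; apply/hseg'; exists (s i).
Qed.

Definition M : 'M[R]_n := \matrix_i v i.

Lemma unitM : M \in unitmx.
Proof.
rewrite -row_full_unit -sub1mx; apply/row_subP => i.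
have [k [c [u [hu ->]]]] := hfull (row i 1%:M).
apply: summx_sub => j _; apply: scalemx_sub.
have [x [y [/inQ_iff [s [_ ->]] [/inQ_iff [s' [_ ->]] ->]]]] := hu j.
have -> : A + \sum_i0 s i0 *: v i0 - (A + \sum_i0 s' i0 *: v i0) =
   (\row_l (s l - s' l)) *m M.
  rewrite mulmx_sum_row opprD addrACA subrr add0r -sumrN -big_split /=.
  by apply: eq_bigr => l _; rewrite rowK mxE scalerBl.
exact: submxMl.
Qed.

Definition N := invmx M.
Definition kap (x : V) (j : 'I_n) : R := (x *m N) 0 j.

Lemma kD x y j : kap (x + y) j = kap x j + kap y j.
Proof. by rewrite /kap mulmxDl mxE. Qed.
Lemma k0 j : kap 0 j = 0.
Proof. by rewrite /kap mul0mx mxE. Qed.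
Lemma kN x j : kap (- x) j = - kap x j.
Proof. by rewrite /kap mulNmx mxE. Qed.
Lemma kB x y j : kap (x - y) j = kap x j - kap y j.
Proof. by rewrite kD kN. Qed.
Lemma kZ t x j : kap (t *: x) j = t * kap x j.
Proof. by rewrite /kap -scalemxAl mxE. Qed.
Lemma kv i j : kap (v i) j = (i == j)%:R.
Proof.
rewrite /kap -(rowK v i) -/M -row_mul /N mulmxV ?unitM // row1 mxE.
by rewrite eqxx /= eq_sym.
Qed.
Lemma ksum (F : 'I_n -> V) j : kap (\sum_i F i) j = \sum_i kap (F i) j.
Proof. by rewrite /kap mulmx_suml summxE. Qed.
Lemma kcomb (s : 'I_n -> R) j : kap (\sum_i s i *: v i) j = s j.
Proof.
rewrite ksum (bigD1 j) //= kZ kv eqxx mulr1 big1 ?addr0 // => i ij.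
by rewrite kZ kv (negbTE ij) mulr0.
Qed.
Lemma recon x : x = \sum_i kap x i *: v i.
Proof.
rewrite -{1}(mulmxKV unitM x) mulmx_sum_row.
by apply: eq_bigr => i _; rewrite rowK.
Qed.

Lemma Q_kap x : inQ W x <-> forall i, 0 <= kap (x - A) i <= 1.
Proof.
split => [/inQ_iff [s [hs ->]] i|h].
  by rewrite addrC addKr kcomb.
apply/inQ_iff; exists (fun i => kap (x - A) i); split => //.
by rewrite -recon addrC subrK.
Qed.

Definition tp i x := kap x i - kap (a i) i.

Lemma param i x : x \in W i -> x = a i + tp i x *: v i /\ 0 <= tp i x <= 1.
Proof.
move/mem_inconv/hseg' => [t [ht ->]].
have -> : tp i (a i + t *: v i) = t.
  by rewrite /tp kD kZ kv eqxx mulr1 addrC addKr.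
by [].
Qed.

Lemma H1 i x j : x \in W i -> j != i -> kap x j = kap (a i) j.
Proof.
move/param => [-> _] ji; rewrite kD kZ kv eq_sym (negbTE ji) mulr0 addr0 //.
Qed.

Lemma H2 i x x' : x \in W i -> x' \in W i -> kap x i = kap x' i -> x = x'.
Proof.
move=> xW x'W e.
by rewrite (proj1 (param xW)) (proj1 (param x'W)) /tp e.
Qed.


Lemma size_msum I : size (msum W I) = (\prod_(i in I) size (undup (W i)))%N.
Proof.
have := @count_Sf R n W kap a kD k0 H1 H2 (enum I) (fun _ => 0) (fun _ _ => true) (enum_uniq I).
have hall (l : seq 'I_n) : all (fun _ => true) l by elim: l.
rewrite (eq_count (a2 := predT)); last by move=> z; rewrite /= hall.
rewrite count_predT /Sf -/(msum W I) => ->; rewrite -big_enum.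
by apply: eq_bigr => i _; rewrite count_predT.
Qed.

Lemma Dmix_eq : Dmix W = \prod_i ((size (undup (W i)))%:Z - 1).
Proof.
rewrite -alt_sum /Dmix; apply: eq_bigr => I _; rewrite size_msum.
by rewrite -natz natr_prod; congr (_ * _); apply: eq_bigr => i _; rewrite natz.
Qed.

Lemma pboolE (P : Prop) (c : bool) : (P <-> c) -> pbool P = c.
Proof.
rewrite /pbool; case: excluded_middle_informative => [p [h _]|np [_ h]].
  by rewrite h.
by case: c h => // /(_ isT).
Qed.

Lemma cnt_main delta :
  count (fun x => pbool (inQ W (x - delta))) (msum W setT) =
  (\prod_i count (fun x => (0 <= tp i x - kap delta i <= 1)%R) (undup (W i)))%N.
Proof.
have := @count_Sf R n W kap a kD k0 H1 H2 (enum setT) (fun j => kap (delta + A) j)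
  (fun _ r => 0 <= r <= 1) (enum_uniq _).
rewrite /Sf -/(msum W setT).
rewrite (eq_count (a2 := fun x => pbool (inQ W (x - delta)))); last first.
  move=> z /=; apply/esym/pboolE; rewrite Q_kap; split => h.
    by apply/allP => j _; rewrite -kB opprD addrA; apply: h.
  by move=> j; move/allP: h => /(_ j); rewrite mem_enum inE -kB opprD addrA => ->.
move=> ->; rewrite big_enum; apply: eq_big => [i|i _]; first by rewrite inE.
apply: eq_count => x /=.
have E : \sum_(k < n) kap (a k) i = kap (a i) i + \sum_(k in [set: 'I_n] | k != i) kap (a k) i.
  by rewrite (bigD1 i) //=; congr (_ + _); apply: eq_bigl => k; rewrite inE.
by rewrite big_enum_cond kD /A ksum E /tp; congr (_ && _); congr (_ <= _); lra.
Qed.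

Lemma tp_a i : tp i (a i) = 0.
Proof. by rewrite /tp subrr. Qed.
Lemma tp_b i : tp i (b i) = 1.
Proof. by rewrite /tp -kB kv eqxx. Qed.
Lemma tp_a_eq i x : x \in W i -> (x == a i) = (tp i x == 0).
Proof.
move=> xW; apply/eqP/eqP => [->|h]; first exact: tp_a.
by rewrite (proj1 (param xW)) h scale0r addr0.
Qed.
Lemma tp_b_eq i x : x \in W i -> (x == b i) = (tp i x == 1).
Proof.
move=> xW; apply/eqP/eqP => [->|h]; first exact: tp_b.
by rewrite (proj1 (param xW)) h scale1r /v addrC subrK.
Qed.

Lemma count_factor i d : d != 0 ->
  (forall x, x \in W i -> 0 < tp i x -> `|d| < tp i x) ->
  (forall x, x \in W i -> tp i x < 1 -> `|d| < 1 - tp i x) ->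
  count (fun x => 0 <= tp i x - d <= 1) (undup (W i)) = (size (undup (W i)) - 1)%N.
Proof.
move=> d0 g1 g2.
have [dpos|dneg] := ltrP 0 d.
  rewrite (eq_in_count (a2 := predC (pred1 (a i)))); last first.
    move=> x; rewrite mem_undup => xW /=; rewrite (tp_a_eq xW).
    have /andP [t0 t1] := proj2 (param xW).
    have [->|tn] := eqVneq (tp i x) 0; first by rewrite /=; apply/negbTE; rewrite negb_and -!ltNge; apply/orP; left; lra.
    have tp0 : 0 < tp i x by rewrite lt_def tn t0.
    have := g1 x xW tp0; rewrite gtr0_norm // => h.
    apply/andP; split; lra.
  rewrite -(count_predC (pred1 (a i))) count_uniq_mem ?undup_uniq // mem_undup aW.
  by rewrite addnC addnK.
have dlt : d < 0 by rewrite lt_neqAle d0.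
rewrite (eq_in_count (a2 := predC (pred1 (b i)))); last first.
  move=> x; rewrite mem_undup => xW /=; rewrite (tp_b_eq xW).
  have /andP [t0 t1] := proj2 (param xW).
  have [->|tn] := eqVneq (tp i x) 1; first by rewrite /=; apply/negbTE; rewrite negb_and -!ltNge; apply/orP; right; lra.
  have tp0 : tp i x < 1 by rewrite lt_def eq_sym tn t1.
  have := g2 x xW tp0; rewrite ltr0_norm // => h.
  apply/andP; split; lra.
rewrite -(count_predC (pred1 (b i))) count_uniq_mem ?undup_uniq // mem_undup bW.
by rewrite addnC addnK.
Qed.


Lemma face_nz delta i :
  (forall F : V -> Prop, is_proper_face (inQ W) F -> ~ inspan (diffset F) delta) ->
  kap delta i != 0.
Proof.
move=> hF; apply/negP => /eqP d0.
pose c : V := \row_k (- N k i).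
have dotc y : dotv c y = - kap y i.
  rewrite /dotv /kap mxE -sumrN; apply: eq_bigr => k _; rewrite mxE mulNr mulrC.
  by [].
pose F := fun x => inQ W x /\ forall y, inQ W y -> dotv c y <= dotv c x.
have FQ x : inQ W x -> kap (x - A) i = 0 -> F x.
  move=> xQ h; split => // y /Q_kap /(_ i) /andP [h0 _].
  move: h0 h; rewrite !dotc !kB => h0 h; lra.
have AQ : inQ W A by apply/Q_kap => j; rewrite subrr k0 lexx ler01.
have AvQ k : inQ W (A + v k).
  by apply/Q_kap => j; rewrite addrC addKr kv; case: (k == j); rewrite ?lexx ?ler01.
apply: (hF F).
  split; first by exists c => x; exact: iff_refl.
  exists (A + v i); split => //; case => _ /(_ A AQ); rewrite !dotc kD kv eqxx.
  rewrite /= => ?; lra.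
exists n, (fun k => kap delta k), (fun k => if k == i then 0 else v k); split.
  move=> k; case: ifP => ki.
    exists A, A; split; first by apply: FQ; rewrite ?subrr ?k0.
    by split; [apply: FQ; rewrite ?subrr ?k0 | rewrite subrr].
  exists (A + v k), A; split; first by apply: FQ => //; rewrite addrC addKr kv ki.
  by split; [apply: FQ; rewrite ?subrr ?k0 | rewrite addrC addKr].
rewrite {1}(recon delta); apply: eq_bigr => k _; case: ifP => [/eqP ->|//].
by rewrite d0 !scale0r.
Qed.

Lemma lb_seq (s : seq R) : exists g, 0 < g /\ forall y, y \in s -> 0 < y -> g <= y.
Proof.
elim: s => [|x s [g [g0 hg]]]; first by exists 1; split => //; rewrite ltr01.
have [x0|x0] := ltrP 0 x.
  exists (Num.min g x); split; first by rewrite lt_min g0 x0.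
  move=> y; rewrite inE => /orP [/eqP ->|ys] y0; first by rewrite ge_min lexx orbT.
  by rewrite ge_min hg.
exists g; split => // y; rewrite inE => /orP [/eqP -> y0|]; last exact: hg.
by move: x0; rewrite leNgt y0.
Qed.

Lemma gap : exists g, 0 < g /\ forall i x, x \in W i ->
  (0 < tp i x -> g <= tp i x) /\ (tp i x < 1 -> g <= 1 - tp i x).
Proof.
have [g [g0 hg]] := lb_seq ([seq tp i x | i <- enum 'I_n, x <- W i] ++
                           [seq 1 - tp i x | i <- enum 'I_n, x <- W i]).
exists g; split => // i x xW; split => h.
  apply: hg => //; rewrite mem_cat; apply/orP; left.
  by apply: (allpairs_f_dep (fun i x => tp i x)) => //; rewrite mem_enum.
apply: hg; last by rewrite subr_gt0.
rewrite mem_cat; apply/orP; right.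
by apply: (allpairs_f_dep (fun i x => 1 - tp i x)) => //; rewrite mem_enum.
Qed.

Lemma sq_small (e : R) (x : V) k : 0 < e -> sqnorm x < e * e -> `|x 0 k| < e.
Proof.
move=> e0 h.
have : x 0 k * x 0 k <= sqnorm x.
  rewrite /sqnorm /dotv (bigD1 k) //= lerDl; apply: sumr_ge0 => j _.
  by rewrite -expr2 sqr_ge0.
have [x0|x0] := lerP 0 (x 0 k); [rewrite ger0_norm // | rewrite ltr0_norm //]; nra.
Qed.

Lemma kap_small (e : R) (x : V) i : 0 <= e -> (forall k, `|x 0 k| < e) ->
  `|kap x i| <= e * \sum_k \sum_j `|N k j|.
Proof.
move=> e0 hx; rewrite /kap mxE.
apply: (le_trans (ler_norm_sum _ _ _)); rewrite mulr_sumr; apply: ler_sum => k _.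
rewrite normrM; apply: ler_pM => //; first exact: ltW.
by rewrite (bigD1 i) //= lerDl; apply: sumr_ge0 => j _.
Qed.


Lemma main_sec : exists eps : R, 0 < eps /\
    forall delta : V, sqnorm delta < eps ->
      (forall F : V -> Prop, is_proper_face (inQ W) F -> ~ inspan (diffset F) delta) ->
      Dmix W = (count (fun x => pbool (inQ W (x - delta))) (msum W setT))%:Z.
Proof.
have [g [g0 hg]] := gap.
pose K := \sum_k \sum_j `|N k j|.
have K0 : 0 <= K by apply: sumr_ge0 => k _; apply: sumr_ge0.
have K1 : 0 < K + 1 by lra.
pose e := g / (K + 1).
have e0 : 0 < e by rewrite divr_gt0.
have ee : e * K + e = g by rewrite -[e in _ + e]mulr1 -mulrDr /e divfK // lt0r_neq0.
exists (e * e); split; first by rewrite mulr_gt0.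
move=> delta hd hF.
have dsmall i : `|kap delta i| < g.
  have := kap_small i (ltW e0) (fun k => sq_small k e0 hd).
  rewrite -/K => h; lra.
rewrite Dmix_eq cnt_main -natz natr_prod; apply: eq_bigr => i _.
rewrite (count_factor (face_nz i hF)); first last.
- move=> x xW h; apply: (lt_le_trans (dsmall i)); exact: (proj2 (hg i x xW) h).
- move=> x xW h; apply: (lt_le_trans (dsmall i)); exact: (proj1 (hg i x xW) h).
have s1 : (1 <= size (undup (W i)))%N.
  by case: (undup (W i)) (mem_undup (W i) (a i)) => //; rewrite aW.
by rewrite natrB // natz.
Qed.

End Geo.

Theorem proposition5p3 (R : realFieldType) (n : nat) (W : 'I_n -> seq 'rV[R]_n) :
  (forall i, is_pos_segment (W i)) ->
  full_dim (inQ W) ->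
  exists eps : R, 0 < eps /\
    forall delta : 'rV[R]_n, sqnorm delta < eps ->
      (forall F : 'rV[R]_n -> Prop, is_proper_face (inQ W) F ->
         ~ inspan (diffset F) delta) ->
      Dmix W = (count (fun x => pbool (inQ W (x - delta))) (msum W setT))%:Z.
Proof.
move=> hW hfull.
have : forall i, exists ab : 'rV[R]_n * 'rV[R]_n, ab.1 != ab.2 /\
   forall x, inconv (W i) x <-> exists t : R, 0 <= t <= 1 /\ x = (1 - t) *: ab.1 + t *: ab.2.
  by move=> i; have [p [q [pq h]]] := hW i; exists (p, q).
move/fin_all_exists => [ab hab].
exact: (@main_sec R n W (fun i => (ab i).1) (fun i => (ab i).2)
  (fun i => proj1 (hab i)) (fun i => proj2 (hab i)) hfull).
Qed.
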